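(* Let $n\ge2$ and $d>2$. Let $S=\{\mathbf{m}\in T_{n,d}:\max(\mathbf{m})\ge d-1\}$ and let $A\subseteq\mathbb{N}^n$ be the semigroup generated by $S$. Then $\mathcal{A}_{n,d}\setminus A$ is finite. More precisely, if $\mathbf{e}\in\mathcal{A}_{n,d}$ satisfies $\max(\mathbf{e})\ge(n-1)(d^2-d)$, then $\mathbf{e}\in A$. Consequently, for any semigroup $B$ generated by a set $U$ with $S\subseteq U\subseteq T_{n,d}$, the set $\mathcal{A}_{n,d}\setminus B$ is finite.
   Context: For $\mathbf{a}\in\mathbb{N}^n$, $|\mathbf{a}|=\sum_i a_i$ and $\max(\mathbf{a})=\max_i a_i$. $T_{n,d}=\{\mathbf{a}\in\mathbb{N}^n:|\mathbf{a}|=d\}$ and $\mathcal{A}_{n,d}$ is the additive semigroup generated by $T_{n,d}$. *)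

(* Defs.v *)
From mathcomp Require Import all_boot.
Set Implicit Arguments. Unset Strict Implicit. Unset Printing Implicit Defensive.

Definition vec (n : nat) := {ffun 'I_n -> nat}.

Definition vsum n (a : vec n) : nat := \sum_(i < n) a i.
(* max(a) = largest coordinate (0 for n = 0) *)
Definition vmax n (a : vec n) : nat := \max_(i < n) a i.

Definition vzero n : vec n := [ffun => 0].
Definition vadd n (a b : vec n) : vec n := [ffun i => a i + b i].

Definition Tnd n d (a : vec n) : Prop := vsum a = d.

Inductive gen_semigroup n (U : vec n -> Prop) : vec n -> Prop :=
| gen_zero : gen_semigroup U (vzero n)
| gen_add u x : U u -> gen_semigroup U x -> gen_semigroup U (vadd u x).

Definition Aset n d := gen_semigroup (@Tnd n d).

Definition finite_diff n (X Y : vec n -> Prop) : Prop :=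
  exists s : seq (vec n), forall e, X e -> ~ Y e -> e \in s.

(* Main.v *)
Require Import Defs.
From mathcomp Require Import all_boot zify.
Set Implicit Arguments. Unset Strict Implicit. Unset Printing Implicit Defensive.

Definition vsub n (a b : vec n) : vec n := [ffun i => a i - b i].
Definition delta n (i : 'I_n) c : vec n := [ffun k => if k == i then c else 0].
Definition Sd n d (m : vec n) : Prop := @Tnd n d m /\ d - 1 <= vmax m.

Lemma vadd_sub n (u e : vec n) : (forall i, u i <= e i) -> e = vadd u (vsub e u).
Proof. by move=> H; apply/ffunP=> i; rewrite !ffunE subnKC. Qed.

Lemma vsum_add n (a b : vec n) : vsum (vadd a b) = vsum a + vsum b.
Proof. by rewrite /vsum -big_split; apply: eq_bigr => i _; rewrite ffunE. Qed.

Lemma vsum_sub n (u e : vec n) : (forall i, u i <= e i) ->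
  vsum (vsub e u) = vsum e - vsum u.
Proof. by move=> H; rewrite {2}(vadd_sub H) vsum_add addKn. Qed.

Lemma coord_le n (e : vec n) i : e i <= vsum e.
Proof. by rewrite /vsum (bigD1 i) //= leq_addr. Qed.

Lemma vsum_split n (e : vec n) i : vsum e = e i + \sum_(k | k != i) e k.
Proof. by rewrite /vsum (bigD1 i). Qed.

Lemma vsum0 n (e : vec n) : vsum e = 0 -> e = vzero n.
Proof.
move=> H; apply/ffunP=> i; rewrite ffunE; move: (coord_le e i); rewrite H => h; apply/eqP; by rewrite -leqn0.
Qed.

Lemma delta_val n (i k : 'I_n) c : delta i c k = if k == i then c else 0.
Proof. by rewrite ffunE. Qed.

Lemma vsum_delta n (i : 'I_n) c : vsum (delta i c) = c.
Proof.
rewrite (vsum_split _ i) delta_val eqxx big1 ?addn0 // => k /negbTE.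
by rewrite delta_val => ->.
Qed.

Lemma vmax_ge n (e : vec n) i : e i <= vmax e.
Proof. exact: (leq_bigmax i). Qed.

Lemma gen_step n (S : vec n -> Prop) (e u : vec n) : S u -> (forall i, u i <= e i) ->
  gen_semigroup S (vsub e u) -> gen_semigroup S e.
Proof. by move=> Su H G; rewrite (vadd_sub H); constructor. Qed.

Lemma gen_mono n (S U : vec n -> Prop) (e : vec n) : (forall m, S m -> U m) ->
  gen_semigroup S e -> gen_semigroup U e.
Proof. by move=> H; elim=> [|u x Su _ IH]; constructor; auto. Qed.

Lemma Aset_dvd n d (e : vec n) : @Aset n d e -> d %| vsum e.
Proof.
elim=> [|u x Tu _ IH].
  by rewrite /vsum big1 // => i _; rewrite ffunE.
by rewrite vsum_add Tu dvdn_add.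
Qed.

Lemma lemA n d (i0 : 'I_n) : 0 < d -> forall k (e : vec n), vsum e <= k ->
  d %| vsum e -> (forall j, j != i0 -> e j < d) ->
  (d - 1) * (vsum e - e i0) <= e i0 -> gen_semigroup (@Sd n d) e.
Proof.
move=> d0; elim=> [|k IH] e Hk Hd Hlt Hi.
  have -> : e = vzero n by apply: vsum0; move: Hk; rewrite leqn0 => /eqP.
  constructor.
have [/vsum0 -> | s0] := eqVneq (vsum e) 0; first by constructor.
have dle : d <= vsum e by apply: dvdn_leq; lia.
have ei := coord_le e i0.
have [Sg0|Sg] := eqVneq (vsum e - e i0) 0.
  have hu : forall i, delta i0 d i <= e i.
    move=> i; rewrite delta_val; case: eqP => [->|//]; lia.
  apply: (gen_step (u := delta i0 d)) => //.
    split; first exact: vsum_delta.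
    by apply: leq_trans (vmax_ge _ i0); rewrite delta_val eqxx; lia.
  apply: IH.
  - rewrite vsum_sub // vsum_delta; lia.
  - by rewrite vsum_sub // vsum_delta dvdn_sub.
  - move=> j /Hlt; rewrite ffunE; lia.
  - rewrite vsum_sub // vsum_delta ffunE delta_val eqxx; lia.
case: (pickP (fun j => (j != i0) && (0 < e j))) => [j /andP[ji ej] | H0]; last first.
  exfalso; move: Sg; rewrite (vsum_split e i0) big1 ?addn0 ?subnn ?eqxx //.
  by move=> j ji; move: (H0 j); rewrite /= ji /=; lia.
have ei0 : d - 1 <= e i0.
  have : 1 <= vsum e - e i0 by lia.
  move=> h; apply: leq_trans Hi; rewrite -{1}(muln1 (d-1)); exact: leq_mul.
set u := vadd (delta j 1) (delta i0 (d-1)).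
have uj : forall i, u i = (if i == j then 1 else 0) + (if i == i0 then d - 1 else 0).
  by move=> i; rewrite /u ffunE !delta_val.
have hu : forall i, u i <= e i.
  move=> i; rewrite uj; case: eqP => [->|_]; first by rewrite (negbTE ji); lia.
  by case: eqP => [->|_]; lia.
have su : vsum u = d by rewrite /u vsum_add !vsum_delta; lia.
apply: (gen_step (u := u)) => //.
  split; first exact: su.
  by apply: leq_trans (vmax_ge _ i0); rewrite uj eqxx eq_sym (negbTE ji); lia.
have e'i : vsub e u i0 = e i0 - (d - 1).
  by rewrite ffunE uj eqxx eq_sym (negbTE ji).
apply: IH.
- rewrite vsum_sub // su; lia.
- by rewrite vsum_sub // su dvdn_sub.
- move=> i /Hlt; rewrite ffunE; lia.
- rewrite e'i vsum_sub // su.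
  move: Hi; set D := d - 1; set s := vsum e; set x := e i0 => Hi.
  have -> : s - d - (x - D) = (s - x) - 1 by lia.
  rewrite mulnBr muln1; lia.
Qed.

Lemma lemB n d (i0 : 'I_n) : 0 < d -> forall k (e : vec n), vsum e <= k ->
  d %| vsum e -> (n - 1) * (d - 1) * (d - 1) <= e i0 -> gen_semigroup (@Sd n d) e.
Proof.
move=> d0; elim=> [|k IH] e Hk Hd Hi.
  have -> : e = vzero n by apply: vsum0; move: Hk; rewrite leqn0 => /eqP.
  constructor.
case: (pickP (fun j => (j != i0) && (d <= e j))) => [j /andP[ji ej] | H0].
  have hu : forall i, delta j d i <= e i.
    move=> i; rewrite delta_val; case: eqP => [->|//]; lia.
  have ej' := coord_le e j.
  apply: (gen_step (u := delta j d)) => //.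
    split; first exact: vsum_delta.
    by apply: leq_trans (vmax_ge _ j); rewrite delta_val eqxx; lia.
  apply: IH.
  - rewrite vsum_sub // vsum_delta; lia.
  - by rewrite vsum_sub // vsum_delta dvdn_sub.
  - by rewrite ffunE delta_val eq_sym (negbTE ji) subn0.
have Hlt : forall j, j != i0 -> e j < d.
  by move=> j ji; move: (H0 j); rewrite /= ji /=; lia.
apply: (@lemA n d i0 d0 (vsum e)) => //.
have -> : vsum e - e i0 = \sum_(k | k != i0) e k by rewrite (vsum_split e i0); lia.
have hs : \sum_(k | k != i0) e k <= (n - 1) * (d - 1).
  apply: (@leq_trans (\sum_(k in predC1 i0) (d - 1))).
    by apply: leq_sum => j ji; move: (Hlt j ji); lia.
  by rewrite sum_nat_const cardC1 card_ord -!subn1.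
apply: leq_trans Hi; rewrite mulnC; exact: leq_mul.
Qed.

Lemma bounded_fin n M (X Y : vec n -> Prop) :
  (forall e, X e -> ~ Y e -> vmax e <= M) -> finite_diff X Y.
Proof.
move=> H.
exists (map (fun f : {ffun 'I_n -> 'I_M.+1} => ([ffun i => nat_of_ord (f i)] : vec n)) (enum {ffun 'I_n -> 'I_M.+1})).
move=> e Xe Ye; have Hm := H e Xe Ye.
apply/mapP; exists [ffun i => inord (e i) : 'I_M.+1]; first by rewrite mem_enum.
apply/ffunP=> i; rewrite !ffunE inordK //.
by apply: leq_ltn_trans (vmax_ge e i) _.
Qed.

Theorem lemma5p1 (n d : nat) : 2 <= n -> 2 < d ->
  let S := fun m : vec n => @Tnd n d m /\ d - 1 <= vmax m in
  finite_diff (@Aset n d) (gen_semigroup S) /\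
  (forall e : vec n, @Aset n d e -> (n - 1) * (d ^ 2 - d) <= vmax e ->
     gen_semigroup S e) /\
  (forall U : vec n -> Prop, (forall m, S m -> U m) -> (forall m, U m -> @Tnd n d m) ->
     finite_diff (@Aset n d) (gen_semigroup U)).
Proof.
move=> n2 d2 S.
have P2 : forall e : vec n, @Aset n d e -> (n - 1) * (d ^ 2 - d) <= vmax e ->
     gen_semigroup S e.
  move=> e Ae Hm.
  have [i0 Hi0] : {i0 : 'I_n | vmax e = e i0}.
    by apply: eq_bigmax; rewrite card_ord; lia.
  apply: (@lemB n d i0 _ (vsum e)) => //; first lia.
    exact: Aset_dvd.
  rewrite -Hi0; apply: leq_trans Hm.
  rewrite -mulnA leq_mul2l; apply/orP; right.
  have -> : d ^ 2 - d = d * (d - 1) by rewrite mulnBr muln1.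
  by rewrite leq_mul2r leq_subr orbT.
have P1 : finite_diff (@Aset n d) (gen_semigroup S).
  apply: (@bounded_fin _ ((n - 1) * (d ^ 2 - d))) => e Ae NS.
  rewrite leqNgt; apply/negP => h; apply: NS; apply: P2 => //; lia.
split=> //; split=> // U SU _.
apply: (@bounded_fin _ ((n - 1) * (d ^ 2 - d))) => e Ae NU.
rewrite leqNgt; apply/negP => h; apply: NU; apply: (gen_mono SU); apply: P2 => //; lia.
Qed.
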